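(* Let $C\subset\mathbb R^3$ be an embedded curve (closed or non-closed) with nowhere vanishing curvature, and let $F,G\in\mathcal D(C)$ be normal forms with $F(0,0)=G(0,0)$. If $\mu_F=\mu_G$, then either $G=F$ or $G=\check F$.
   Context: $C$ has length $l>0$ and an orientation; $J=[-l/2,l/2]$ if $C$ is non-closed, $J=\mathbb R/l\mathbb Z$ if closed. A developable strip along $C$ is the germ of a $C^\infty$ embedding $f(u,v)=f(u,0)+v\,\xi_f(u)$ with $\mathbf c_f(u)=f(u,0)$ parametrizing $C$, $\xi_f$ a unit vector field, and zero Gaussian curvature; with the Frenet frame $(\mathbf e,\mathbf n,\mathbf b)$ of $\mathbf c_f$ write $\xi_f=\cos\beta_f\,\mathbf e+\sin\beta_f(\cos\alpha_f\,\mathbf n+\sin\alpha_f\,\mathbf b)$. $\mathcal D(C)$: strips with $\mathbf c_f$ inducing the orientation of $C$ and $0<|\cos\alpha_f|<1$, normalized so $0<|\alpha_f|<\pi/2$ (first angular function), $0<\beta_f<\pi$. Geodesic curvature: $\mu_f=\kappa_f\cos\alpha_f$ with $\kappa_f$ the curvature of $\mathbf c_f$. A normal form is such a strip $F(s,v)$ defined near $J\times\{0\}$ with $s\mapsto F(s,0)$ an arc-length parametrization of $C$; zero Gaussian curvature is equivalent to $\cot\beta_F=(\alpha_F'+\tau)/(\kappa\sin\alpha_F)$ ($\kappa,\tau$ curvature and torsion of $s\mapsto F(s,0)$), so a normal form is determined by $F(0,0)$ and $\alpha_F$. The dual $\check F$ of a normal form $F$ is the normal form with $\check F(s,0)=F(s,0)$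 and first angular function $-\alpha_F$. *)

(* Defs.v *)
From Stdlib Require Import Reals.
From Coquelicot Require Import Coquelicot.
Open Scope R_scope.

Record V3 := mkV3 { v1 : R; v2 : R; v3 : R }.

Definition vadd (a b : V3) : V3 := mkV3 (v1 a + v1 b) (v2 a + v2 b) (v3 a + v3 b).
Definition vscale (r : R) (a : V3) : V3 := mkV3 (r * v1 a) (r * v2 a) (r * v3 a).
Definition dot (a b : V3) : R := v1 a * v1 b + v2 a * v2 b + v3 a * v3 b.
Definition cross (a b : V3) : V3 :=
  mkV3 (v2 a * v3 b - v3 a * v2 b) (v3 a * v1 b - v1 a * v3 b) (v1 a * v2 b - v2 a * v1 b).
Definition vnorm (a : V3) : R := sqrt (dot a a).
Definition det3 (a b c : V3) : R := dot a (cross b c).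
Definition vzero : V3 := mkV3 0 0 0.

Definition DV (f : R -> V3) (s : R) : V3 :=
  mkV3 (Derive (fun t => v1 (f t)) s) (Derive (fun t => v2 (f t)) s)
       (Derive (fun t => v3 (f t)) s).

Definition smooth1 (g : R -> R) : Prop := forall (k : nat) (x : R), ex_derive (Derive_n g k) x.
Definition smoothV (f : R -> V3) : Prop :=
  smooth1 (fun t => v1 (f t)) /\ smooth1 (fun t => v2 (f t)) /\ smooth1 (fun t => v3 (f t)).

(** Parameter domain J: [-l/2, l/2] if non-closed; for closed curves J = R/lZ,
    represented by l-periodic functions on R and the fundamental domain [0, l). *)
Definition Jdom (closed : bool) (l s : R) : Prop :=
  if closed then 0 <= s < l else - (l / 2) <= s <= l / 2.

(** Frenet apparatus of a unit-speed curve c. *)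
Definition curvature (c : R -> V3) (s : R) : R := vnorm (DV (DV c) s).
Definition tangentF (c : R -> V3) (s : R) : V3 := DV c s.
Definition normalF (c : R -> V3) (s : R) : V3 := vscale (/ curvature c s) (DV (DV c) s).
Definition binormalF (c : R -> V3) (s : R) : V3 := cross (tangentF c s) (normalF c s).
Definition torsion (c : R -> V3) (s : R) : R := dot (DV (normalF c) s) (binormalF c s).

(** C is an embedded curve of length l (closed or not) given by an
    orientation-defining arc-length parametrization gam. *)
Definition ArcCurve (gam : R -> V3) (l : R) (closed : bool) : Prop :=
  0 < l /\ smoothV gam /\ (forall t, vnorm (DV gam t) = 1) /\
  (closed = true -> forall t, gam (t + l) = gam t) /\
  (forall t1 t2, Jdom closed l t1 -> Jdom closed l t2 -> gam t1 = gam t2 -> t1 = t2).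

Definition pS (F : R -> R -> V3) (s v : R) : V3 := DV (fun t => F t v) s.
Definition pV (F : R -> R -> V3) (s v : R) : V3 := DV (fun w => F s w) v.
Definition pSS (F : R -> R -> V3) (s v : R) : V3 := DV (fun t => pS F t v) s.
Definition pSV (F : R -> R -> V3) (s v : R) : V3 := DV (fun w => pS F s w) v.
Definition pVV (F : R -> R -> V3) (s v : R) : V3 := DV (fun w => pV F s w) v.

(** Gaussian curvature K = (LN - M^2)/(EG - F^2), written with the unnormalised
    normal fs x fv. *)
Definition gaussK (F : R -> R -> V3) (s v : R) : R :=
  let fs := pS F s v in let fv := pV F s v in
  let W := dot (cross fs fv) (cross fs fv) in
  (det3 (pSS F s v) fs fv * det3 (pVV F s v) fs fv - (det3 (pSV F s v) fs fv) ^ 2) / (W ^ 2).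

(** [NormalForm gam l closed F alpha]: F is (a representative of the germ of)
    a normal form in D(C), C = gam(J), whose first angular function is alpha. *)
Definition NormalForm (gam : R -> V3) (l : R) (closed : bool)
    (F : R -> R -> V3) (alpha : R -> R) : Prop :=
  let J := Jdom closed l in
  let c := fun s => F s 0 in
  exists (xi : R -> V3) (beta : R -> R) (eps : R),
    smoothV c /\ smoothV xi /\
    (forall s v, F s v = vadd (c s) (vscale v (xi s))) /\
    (forall s, vnorm (xi s) = 1) /\
    (closed = true -> forall s v, F (s + l) v = F s v) /\
    (forall s, J s -> vnorm (DV c s) = 1) /\
    (forall s1 s2, J s1 -> J s2 -> c s1 = c s2 -> s1 = s2) /\
    (forall t, J t -> exists s, J s /\ c s = gam t) /\
    (forall s, J s -> exists t, J t /\ c s = gam t /\ 0 < dot (DV c s) (DV gam t)) /\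
    0 < eps /\
    (forall s1 w1 s2 w2, J s1 -> J s2 -> Rabs w1 < eps -> Rabs w2 < eps ->
        F s1 w1 = F s2 w2 -> s1 = s2 /\ w1 = w2) /\
    (forall s v, J s -> Rabs v < eps -> cross (pS F s v) (pV F s v) <> vzero) /\
    (forall s v, J s -> Rabs v < eps -> gaussK F s v = 0) /\
    (forall s, J s ->
        0 < Rabs (alpha s) < PI / 2 /\ 0 < beta s < PI /\
        xi s = vadd (vscale (cos (beta s)) (tangentF c s))
                    (vscale (sin (beta s))
                       (vadd (vscale (cos (alpha s)) (normalF c s))
                             (vscale (sin (alpha s)) (binormalF c s))))).

Definition geodcurv (F : R -> R -> V3) (alpha : R -> R) (s : R) : R :=
  curvature (fun u => F u 0) s * cos (alpha s).

Definition germ_eq (closed : bool) (l : R) (F G : R -> R -> V3) : Prop :=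
  exists eps, 0 < eps /\ forall s v, Jdom closed l s -> Rabs v < eps -> F s v = G s v.

(* Main.v *)
Require Import Defs.
From Stdlib Require Import Reals.
From Coquelicot Require Import Coquelicot.
From Stdlib Require Import Lra Psatz FunctionalExtensionality Classical ClassicalEpsilon.
Open Scope R_scope.

Lemma sm0 g x : smooth1 g -> ex_derive g x.
Proof. intros H; exact (H 0%nat x). Qed.
Lemma sm1 g x : smooth1 g -> ex_derive (Derive g) x.
Proof. intros H; exact (H 1%nat x). Qed.
Lemma sm2 g x : smooth1 g -> ex_derive (Derive (Derive g)) x.
Proof. intros H; exact (H 2%nat x). Qed.

Lemma exd_cont f x : ex_derive f x -> continuity_pt f x.
Proof. intros H; apply continuity_pt_filterlim; apply (ex_derive_continuous (V:=R_NormedModule)); exact H. Qed.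

Definition OSN (P : R -> Prop) (x : R) (d : R) :=
  (forall h, 0 <= h < d -> P (x + h)) \/ (forall h, 0 <= h < d -> P (x - h)).

Lemma os_zero (f : R -> R) x d dl :
  is_derive f x dl -> 0 < d -> OSN (fun y => f y = f x) x d -> dl = 0.
Proof.
  intros Hd Hpos HO. apply is_derive_Reals in Hd.
  destruct (Req_dec dl 0) as [E|NE]; [exact E|exfalso].
  destruct (Hd (Rabs dl)) as [del Hdel]. apply Rabs_pos_lt; exact NE.
  set (h := Rmin d del / 2).
  assert (Hh : 0 < h). { unfold h.
    assert (0 < Rmin d del) by (apply Rmin_glb_lt; [lra| exact (cond_pos del)]). lra. }
  assert (Hh1 : h < d). { unfold h. pose proof (Rmin_l d del). 
    assert (0 < Rmin d del) by (apply Rmin_glb_lt; [lra| exact (cond_pos del)]). lra. }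
  assert (Hh2 : h < del). { unfold h. pose proof (Rmin_r d del).
    assert (0 < Rmin d del) by (apply Rmin_glb_lt; [lra| exact (cond_pos del)]). lra. }
  destruct HO as [HO|HO].
  - specialize (Hdel h). rewrite (HO h) in Hdel by lra.
    replace ((f x - f x) / h - dl) with (- dl) in Hdel by (field; lra).
    rewrite Rabs_Ropp in Hdel. apply Rlt_irrefl with (Rabs dl). apply Hdel. lra.
    rewrite Rabs_pos_eq; lra.
  - specialize (Hdel (-h)). replace (x + - h) with (x - h) in Hdel by ring.
    rewrite (HO h) in Hdel by lra.
    replace ((f x - f x) / - h - dl) with (- dl) in Hdel by (field; lra).
    rewrite !Rabs_Ropp in Hdel. apply Rlt_irrefl with (Rabs dl). apply Hdel. lra.
    rewrite Rabs_pos_eq; lra.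
Qed.

Lemma os_eq (f g : R -> R) x d :
  ex_derive f x -> ex_derive g x -> 0 < d ->
  OSN (fun y => f y = g y) x d -> Derive f x = Derive g x.
Proof.
  intros Hf Hg Hd HO.
  assert (Hfx : f x = g x).
  { destruct HO as [HO|HO]; [specialize (HO 0)|specialize (HO 0)];
    rewrite ?Rplus_0_r, ?Rminus_0_r in HO; apply HO; lra. }
  assert (H := is_derive_minus f g x _ _ (Derive_correct f x Hf) (Derive_correct g x Hg)).
  assert (Derive f x - Derive g x = 0); [|lra].
  apply (os_zero _ x d _ H Hd).
  destruct HO as [HO|HO]; [left|right]; intros h Hh; simpl;
    unfold minus, plus, opp; simpl; rewrite (HO h Hh), Hfx; ring.
Qed.

Lemma J_osn closed l s : 0 < l -> Jdom closed l s -> exists d, 0 < d /\ OSN (Jdom closed l) s d.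
Proof.
  intros Hl Hs. unfold Jdom in *. destruct closed.
  - exists (l - s). split; [lra|]. left. intros h Hh. lra.
  - destruct (Rlt_dec s (l/2)).
    + exists (l/2 - s). split; [lra|]. left; intros h Hh; lra.
    + exists l. split; [lra|]. right; intros h Hh; lra.
Qed.

Lemma OSN_imp (P Q : R -> Prop) x d : (forall y, P y -> Q y) -> OSN P x d -> OSN Q x d.
Proof. intros H [H1|H1]; [left|right]; intros; apply H; auto. Qed.

Lemma J_derive_eq closed l (f g : R -> R) s :
  0 < l -> (forall t, Jdom closed l t -> f t = g t) -> Jdom closed l s ->
  ex_derive f s -> ex_derive g s -> Derive f s = Derive g s.
Proof.
  intros Hl H Hs Hf Hg. destruct (J_osn closed l s Hl Hs) as [d [Hd HO]].
  apply (os_eq f g s d Hf Hg Hd). eapply OSN_imp; [|exact HO]. exact H.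
Qed.

Lemma V3_eq a b : v1 a = v1 b -> v2 a = v2 b -> v3 a = v3 b -> a = b.
Proof. destruct a, b; simpl; intros; subst; reflexivity. Qed.

Lemma J_DV_eq closed l (c d : R -> V3) s :
  0 < l -> (forall t, Jdom closed l t -> c t = d t) -> Jdom closed l s ->
  smoothV c -> smoothV d -> DV c s = DV d s.
Proof.
  intros Hl H Hs [c1 [c2 c3]] [d1 [d2 d3]]. unfold DV. apply V3_eq; simpl;
  apply (J_derive_eq closed l); auto using sm0;
  intros t Ht; rewrite (H t Ht); reflexivity.
Qed.

Lemma J_DDV_eq closed l (c d : R -> V3) s :
  0 < l -> (forall t, Jdom closed l t -> c t = d t) -> Jdom closed l s ->
  smoothV c -> smoothV d -> DV (DV c) s = DV (DV d) s.
Proof.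
  intros Hl H Hs Hc Hd.
  pose proof Hc as [c1 [c2 c3]]; pose proof Hd as [d1 [d2 d3]].
  unfold DV at 1 3. apply V3_eq; simpl;
  apply (J_derive_eq closed l); auto using sm1;
  intros t Ht; pose proof (J_DV_eq closed l c d t Hl H Ht Hc Hd) as E;
  first [exact (f_equal v1 E) | exact (f_equal v2 E) | exact (f_equal v3 E)].
Qed.

Lemma dot_self_1 a : vnorm a = 1 -> dot a a = 1.
Proof.
  unfold vnorm. intros H.
  assert (0 <= dot a a) by (destruct a; unfold dot; simpl; nra).
  rewrite <- (sqrt_sqrt (dot a a)) by exact H0. rewrite H. ring.
Qed.

Lemma dot_self_eq0 a : dot a a = 0 -> a = vzero.
Proof. destruct a as [x y z]; unfold dot, vzero; simpl; intros H.
  assert (x = 0) by nra. assert (y = 0) by nra. assert (z = 0) by nra. subst; reflexivity. Qed.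

Lemma Derive_dot_DV (c : R -> V3) s : smoothV c ->
  ex_derive (fun t => dot (DV c t) (DV c t)) s /\
  Derive (fun t => dot (DV c t) (DV c t)) s = 2 * dot (DV c s) (DV (DV c) s).
Proof.
  intros [c1 [c2 c3]]. unfold dot, DV; simpl.
  pose proof (sm1 _ s c1); pose proof (sm1 _ s c2); pose proof (sm1 _ s c3).
  split.
  - auto_derive. repeat split; auto.
  - apply is_derive_unique. auto_derive. repeat split; auto. ring.
Qed.

Lemma frame_e_ep closed l (c : R -> V3) s : 0 < l -> smoothV c ->
  (forall t, Jdom closed l t -> vnorm (DV c t) = 1) -> Jdom closed l s ->
  dot (DV c s) (DV (DV c) s) = 0.
Proof.
  intros Hl Hc H1 Hs. destruct (Derive_dot_DV c s Hc) as [E D].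
  assert (Derive (fun t => dot (DV c t) (DV c t)) s = Derive (fun _ => 1) s).
  { apply (J_derive_eq closed l); auto. intros t Ht. apply dot_self_1; auto.
    apply ex_derive_const. }
  rewrite D, Derive_const in H. lra.
Qed.

Lemma curv_nz (c : R -> V3) s (xi : V3) a b :
  dot (DV c s) (DV c s) = 1 -> vnorm xi = 1 -> 0 < b < PI ->
  xi = vadd (vscale (cos b) (tangentF c s))
         (vscale (sin b) (vadd (vscale (cos a) (normalF c s)) (vscale (sin a) (binormalF c s)))) ->
  curvature c s <> 0.
Proof.
  intros He Hx Hb Hxi Hk. apply dot_self_1 in Hx.
  assert (sin b > 0) by (apply sin_gt_0; lra).
  pose proof (sin2_cos2 b).
  unfold binormalF, normalF, tangentF in Hxi. rewrite Hk, Rinv_0 in Hxi.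
  subst xi. revert Hx He. destruct (DV c s) as [x y z]. destruct (DV (DV c) s) as [p q r].
  unfold dot, vadd, vscale, cross; simpl. intros. unfold Rsqr in *. nra.
Qed.

Section Ruled.
Variables (F : R -> R -> V3) (c xi : R -> V3).
Hypothesis Hc : smoothV c.
Hypothesis Hxi : smoothV xi.
Hypothesis HF : forall s v, F s v = vadd (c s) (vscale v (xi s)).

Lemma pS_ruled s v : pS F s v = vadd (DV c s) (vscale v (DV xi s)).
Proof.
  destruct Hc as [c1 [c2 c3]]; destruct Hxi as [x1 [x2 x3]].
  unfold pS, DV; apply V3_eq; simpl; 
  (erewrite Derive_ext; [|intros t; rewrite HF; reflexivity]); simpl;
  (rewrite Derive_plus; [rewrite Derive_scal; reflexivity | apply sm0; auto | apply ex_derive_scal; apply sm0; auto]).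
Qed.

Lemma pV_ruled s v : pV F s v = xi s.
Proof.
  unfold pV, DV; apply V3_eq; simpl;
  (erewrite Derive_ext; [|intros t; rewrite HF; reflexivity]); simpl;
  apply is_derive_unique; auto_derive; auto; ring.
Qed.

Lemma pVV_ruled s v : pVV F s v = vzero.
Proof.
  unfold pVV. assert (E: (fun w => pV F s w) = fun _ => xi s)
    by (apply functional_extensionality; intros; apply pV_ruled).
  rewrite E. unfold DV; apply V3_eq; simpl; apply Derive_const.
Qed.

Lemma pSV_ruled s v : pSV F s v = DV xi s.
Proof.
  unfold pSV. assert (E: (fun w => pS F s w) = fun w => vadd (DV c s) (vscale w (DV xi s)))
    by (apply functional_extensionality; intros; apply pS_ruled).
  rewrite E. unfold DV at 1; apply V3_eq; simpl;
  apply is_derive_unique; auto_derive; auto; ring.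
Qed.

Lemma gauss_det s : gaussK F s 0 = 0 -> cross (pS F s 0) (pV F s 0) <> vzero ->
  det3 (DV xi s) (DV c s) (xi s) = 0.
Proof.
  intros HK Hn. unfold gaussK in HK. rewrite pVV_ruled, pSV_ruled, pS_ruled, pV_ruled in HK.
  rewrite pS_ruled, pV_ruled in Hn.
  set (W := dot _ _) in HK.
  assert (W <> 0). { intro E. apply Hn. apply dot_self_eq0. exact E. }
  assert (HW : W ^ 2 <> 0) by (apply pow_nonzero; auto).
  replace (vadd (DV c s) (vscale 0 (DV xi s))) with (DV c s) in HK
    by (destruct (DV c s), (DV xi s); unfold vadd, vscale; simpl; f_equal; ring).
  replace (det3 vzero (DV c s) (xi s)) with 0 in HK
    by (unfold det3, dot, vzero; simpl; ring).
  apply Rmult_integral in HK. destruct HK as [HK|HK]; [|exfalso; apply Rinv_neq_0_compat in HW; auto].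
  replace (det3 (DV xi s) (DV c s) (xi s)) with 0 by (symmetry; nra) ; reflexivity.
Qed.
End Ruled.

Lemma cont_ed f x : continuity_pt f x ->
  forall eps, 0 < eps -> exists d, 0 < d /\ forall y, Rabs (y - x) < d -> Rabs (f y - f x) < eps.
Proof.
  intros H eps He. destruct (H eps He) as [a [Ha Hy]]. exists a. split; auto.
  intros y Hyx. destruct (Req_dec y x) as [E|NE].
  - subst. unfold Rminus. rewrite Rplus_opp_r, Rabs_R0. auto.
  - apply (Hy y). split; [split; [exact I| auto]|]. exact Hyx.
Qed.

Lemma ed_cont f x :
  (forall eps, 0 < eps -> exists d, 0 < d /\ forall y, Rabs (y - x) < d -> Rabs (f y - f x) < eps) ->
  continuity_pt f x.
Proof.
  intros H eps He. destruct (H eps He) as [a [Ha Hy]]. exists a. split; auto.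
  intros y [_ Hyx]. apply Hy. exact Hyx.
Qed.

Definition dist2 (a b : V3) : R := (v1 a - v1 b)^2 + (v2 a - v2 b)^2 + (v3 a - v3 b)^2.

Lemma dist2_pos a b : 0 <= dist2 a b.
Proof. unfold dist2; pose proof (pow2_ge_0 (v1 a - v1 b)); pose proof (pow2_ge_0 (v2 a - v2 b)); pose proof (pow2_ge_0 (v3 a - v3 b)); lra. Qed.

Lemma dist2_0 a b : dist2 a b = 0 -> a = b.
Proof. destruct a as [a1 a2 a3], b as [b1 b2 b3]; unfold dist2; simpl; intros H.
  pose proof (pow2_ge_0 (a1 - b1)); pose proof (pow2_ge_0 (a2 - b2)); pose proof (pow2_ge_0 (a3 - b3)).
  assert ((a1 - b1)^2 = 0) by lra. assert ((a2 - b2)^2 = 0) by lra. assert ((a3 - b3)^2 = 0) by lra.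
  apply V3_eq; simpl; apply Rminus_diag_uniq; apply Rsqr_0_uniq; unfold Rsqr; simpl in *; lra. Qed.

Lemma dist2_cont (g : R -> V3) t0 t : smoothV g ->
  continuity_pt (fun u => dist2 (g u) (g t0)) t.
Proof.
  intros [g1 [g2 g3]]. unfold dist2.
  pose proof (exd_cont _ t (sm0 _ t g1)); pose proof (exd_cont _ t (sm0 _ t g2));
  pose proof (exd_cont _ t (sm0 _ t g3)).
  repeat first [apply continuity_pt_plus | apply continuity_pt_minus | apply continuity_pt_mult
               | apply continuity_pt_const; intros ? ?; reflexivity | assumption].
  all: simpl; rewrite Rmult_1_r; apply continuity_pt_mult; assumption.
Qed.

Lemma smooth_cont_ed (g : R -> V3) t : smoothV g ->
  forall eps, 0 < eps -> exists d, 0 < d /\ forall y, Rabs (y - t) < d -> dist2 (g y) (g t) < eps.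
Proof.
  intros Hg eps He. destruct (cont_ed _ _ (dist2_cont g t t Hg) eps He) as [d [Hd H]].
  exists d; split; auto. intros y Hy. specialize (H y Hy).
  replace (dist2 (g t) (g t)) with 0 in H by (unfold dist2; ring).
  rewrite Rminus_0_r, Rabs_pos_eq in H by apply dist2_pos. exact H.
Qed.

Lemma IC (g : R -> V3) W1 W2 t0 : smoothV g -> W1 <= t0 <= W2 ->
  (forall t, W1 <= t <= W2 -> g t = g t0 -> t = t0) ->
  forall eps, 0 < eps -> exists d, 0 < d /\
    forall t, W1 <= t <= W2 -> dist2 (g t) (g t0) < d -> Rabs (t - t0) < eps.
Proof.
  intros Hg Ht0 Hinj eps He.
  set (f := fun u => dist2 (g u) (g t0)).
  assert (Hf : forall u, continuity_pt f u) by (intros; apply dist2_cont; auto).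
  assert (HL : exists d1, 0 < d1 /\ forall t, W1 <= t <= t0 - eps -> d1 <= f t).
  { destruct (Rle_dec W1 (t0 - eps)) as [Hle|Hn].
    - destruct (continuity_ab_min f W1 (t0 - eps) Hle (fun c _ => Hf c)) as [m [Hm1 Hm2]].
      exists (f m). split; auto.
      destruct (Rle_lt_or_eq_dec 0 (f m) (dist2_pos _ _)) as [P|P]; auto.
      exfalso. symmetry in P. apply dist2_0 in P. apply Hinj in P; lra.
    - exists 1. split; [lra|]. intros; lra. }
  assert (HR : exists d2, 0 < d2 /\ forall t, t0 + eps <= t <= W2 -> d2 <= f t).
  { destruct (Rle_dec (t0 + eps) W2) as [Hle|Hn].
    - destruct (continuity_ab_min f (t0 + eps) W2 Hle (fun c _ => Hf c)) as [m [Hm1 Hm2]].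
      exists (f m). split; auto.
      destruct (Rle_lt_or_eq_dec 0 (f m) (dist2_pos _ _)) as [P|P]; auto.
      exfalso. symmetry in P. apply dist2_0 in P. apply Hinj in P; lra.
    - exists 1. split; [lra|]. intros; lra. }
  destruct HL as [d1 [Hd1 HL]]; destruct HR as [d2 [Hd2 HR]].
  exists (Rmin d1 d2). split; [apply Rmin_glb_lt; auto|].
  intros t Ht Hd. destruct (Rlt_dec (Rabs (t - t0)) eps) as [|Hn]; auto. exfalso.
  apply Rnot_lt_le in Hn. pose proof (Rmin_l d1 d2); pose proof (Rmin_r d1 d2).
  destruct (Rle_dec t t0).
  - rewrite Rabs_left1 in Hn by lra. specialize (HL t ltac:(lra)). unfold f in HL. lra.
  - rewrite Rabs_pos_eq in Hn by lra. specialize (HR t ltac:(lra)). unfold f in HR. lra.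
Qed.

Lemma dlim_bound f x d : derivable_pt_lim f x d ->
  forall eta, 0 < eta -> exists del, 0 < del /\ forall h, Rabs h < del ->
    Rabs (f (x + h) - f x - d * h) <= eta * Rabs h.
Proof.
  intros H eta He. destruct (H eta He) as [del Hdel]. exists del. split; [apply cond_pos|].
  intros h Hh. destruct (Req_dec h 0) as [E|NE].
  - subst. rewrite Rplus_0_r, Rabs_R0. replace (f x - f x - d * 0) with 0 by ring.
    rewrite Rabs_R0. lra.
  - specialize (Hdel h NE Hh).
    replace (f (x + h) - f x - d * h) with (((f (x + h) - f x) / h - d) * h) by (field; auto).
    rewrite Rabs_mult. apply Rmult_le_compat_r; [apply Rabs_pos|lra].
Qed.

Lemma smooth_dlim g x : smooth1 g -> derivable_pt_lim g x (Derive g x).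
Proof. intros H. apply is_derive_Reals. apply Derive_correct. apply sm0; auto. Qed.

Lemma sq_le_of_abs u b : Rabs u <= b -> u ^ 2 <= b ^ 2.
Proof. intros H. pose proof (Rabs_pos u). rewrite <- (pow2_abs u). nra. Qed.

Lemma comp_bound (uc ug a b h D eta : R) :
  0 <= eta ->
  Rabs (uc - a * h) <= eta * Rabs h -> Rabs (ug - b * D) <= eta * Rabs D -> uc = ug ->
  (b * D - a * h) ^ 2 <= 2 * eta ^ 2 * h ^ 2 + 2 * eta ^ 2 * D ^ 2.
Proof.
  intros He H1 H2 E. subst uc.
  apply sq_le_of_abs in H1. apply sq_le_of_abs in H2.
  rewrite Rpow_mult_distr, pow2_abs in H1, H2.
  replace (b * D - a * h) with ((ug - a * h) - (ug - b * D)) by ring.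
  assert (((ug - a * h) - (ug - b * D)) ^ 2 <= 2 * (ug - a * h) ^ 2 + 2 * (ug - b * D) ^ 2)
    by (pose proof (pow2_ge_0 ((ug - a * h) + (ug - b * D))); nra).
  lra.
Qed.

Section Dlem.
Variables (c g : R -> V3) (psi : R -> R) (s0 rho : R).
Hypothesis Hrho : 0 < rho.
Hypothesis Hc : smoothV c.
Hypothesis Hg : smoothV g.
Hypothesis Hcg : forall s, Rabs (s - s0) < rho -> c s = g (psi s).
Hypothesis Hpsi : continuity_pt psi s0.

Let C := DV c s0.
Let T := DV g (psi s0).
Let k := dot C T.

Lemma KS : forall eta, 0 < eta -> exists del, 0 < del /\ forall h, Rabs h < del ->
  let D := psi (s0 + h) - psi s0 in
  D ^ 2 * dot T T - 2 * k * D * h + h ^ 2 * dot C C <= 6 * eta ^ 2 * (h ^ 2 + D ^ 2).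
Proof.
  intros eta He.
  destruct Hc as [c1 [c2 c3]]; destruct Hg as [g1 [g2 g3]].
  destruct (dlim_bound _ _ _ (smooth_dlim _ s0 c1) eta He) as [a1 [Ha1 Hc1]].
  destruct (dlim_bound _ _ _ (smooth_dlim _ s0 c2) eta He) as [a2 [Ha2 Hc2]].
  destruct (dlim_bound _ _ _ (smooth_dlim _ s0 c3) eta He) as [a3 [Ha3 Hc3]].
  destruct (dlim_bound _ _ _ (smooth_dlim _ (psi s0) g1) eta He) as [b1 [Hb1 Hg1]].
  destruct (dlim_bound _ _ _ (smooth_dlim _ (psi s0) g2) eta He) as [b2 [Hb2 Hg2]].
  destruct (dlim_bound _ _ _ (smooth_dlim _ (psi s0) g3) eta He) as [b3 [Hb3 Hg3]].
  set (bb := Rmin b1 (Rmin b2 b3)).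
  assert (Hbb : 0 < bb) by (unfold bb; repeat apply Rmin_glb_lt; auto).
  destruct (cont_ed _ _ Hpsi bb Hbb) as [dp [Hdp Hp]].
  exists (Rmin rho (Rmin dp (Rmin a1 (Rmin a2 a3)))). split.
  { repeat apply Rmin_glb_lt; auto. }
  intros h Hh D.
  assert (Hh1 : Rabs h < rho) by (eapply Rlt_le_trans; [exact Hh|]; apply Rmin_l).
  assert (Hh2 : Rabs h < dp) by (eapply Rlt_le_trans; [exact Hh|]; eapply Rle_trans; [apply Rmin_r|apply Rmin_l]).
  assert (Hh3 : Rabs h < a1).
  { eapply Rlt_le_trans; [exact Hh|]. eapply Rle_trans; [apply Rmin_r|]. eapply Rle_trans; [apply Rmin_r|]. apply Rmin_l. }
  assert (Hh4 : Rabs h < a2).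
  { eapply Rlt_le_trans; [exact Hh|]. eapply Rle_trans; [apply Rmin_r|]. eapply Rle_trans; [apply Rmin_r|].
    eapply Rle_trans; [apply Rmin_r|]. apply Rmin_l. }
  assert (Hh5 : Rabs h < a3).
  { eapply Rlt_le_trans; [exact Hh|]. eapply Rle_trans; [apply Rmin_r|]. eapply Rle_trans; [apply Rmin_r|].
    eapply Rle_trans; [apply Rmin_r|]. apply Rmin_r. }
  assert (HD : Rabs D < bb). { unfold D. apply Hp. replace (s0 + h - s0) with h by ring. auto. }
  assert (HD1 : Rabs D < b1) by (eapply Rlt_le_trans; [exact HD|]; apply Rmin_l).
  assert (HD2 : Rabs D < b2) by (eapply Rlt_le_trans; [exact HD|]; eapply Rle_trans; [apply Rmin_r|apply Rmin_l]).
  assert (HD3 : Rabs D < b3) by (eapply Rlt_le_trans; [exact HD|]; eapply Rle_trans; [apply Rmin_r|apply Rmin_r]).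
  assert (E1 : c (s0 + h) = g (psi s0 + D)).
  { unfold D. replace (psi s0 + (psi (s0 + h) - psi s0)) with (psi (s0 + h)) by ring.
    apply Hcg. replace (s0 + h - s0) with h by ring. auto. }
  assert (E0 : c s0 = g (psi s0)). { apply Hcg. rewrite Rminus_diag, Rabs_R0. auto. }
  pose proof (comp_bound _ _ _ _ h D eta (Rlt_le _ _ He) (Hc1 h Hh3) (Hg1 D HD1)
     ltac:(simpl; rewrite E1, E0; reflexivity)) as K1.
  pose proof (comp_bound _ _ _ _ h D eta (Rlt_le _ _ He) (Hc2 h Hh4) (Hg2 D HD2)
     ltac:(simpl; rewrite E1, E0; reflexivity)) as K2.
  pose proof (comp_bound _ _ _ _ h D eta (Rlt_le _ _ He) (Hc3 h Hh5) (Hg3 D HD3)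
     ltac:(simpl; rewrite E1, E0; reflexivity)) as K3.
  unfold k, C, T, dot, DV; simpl.
  match type of K1 with (?x1 * D - ?y1 * h) ^ 2 <= _ =>
   match type of K2 with (?x2 * D - ?y2 * h) ^ 2 <= _ =>
    match type of K3 with (?x3 * D - ?y3 * h) ^ 2 <= _ =>
      replace (D ^ 2 * (x1 * x1 + x2 * x2 + x3 * x3) - 2 * (y1 * x1 + y2 * x2 + y3 * x3) * D * h +
         h ^ 2 * (y1 * y1 + y2 * y2 + y3 * y3))
      with ((x1 * D - y1 * h) ^ 2 + (x2 * D - y2 * h) ^ 2 + (x3 * D - y3 * h) ^ 2) by ring
  end end end.
  lra.
Qed.

Hypothesis HC1 : dot C C = 1.
Hypothesis HT1 : dot T T = 1.
Hypothesis Hk : 0 < k.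

Lemma k_le1 : k <= 1.
Proof.
  assert (0 <= dot (vadd C (vscale (-1) T)) (vadd C (vscale (-1) T))).
  { destruct (vadd _ _) as [x y z]; unfold dot; simpl; nra. }
  revert H HC1 HT1. unfold k. destruct C as [x y z], T as [p q r]; unfold dot, vadd, vscale; simpl. nra.
Qed.

Lemma KS2 eta : 0 < eta -> eta <= 1/5 -> exists del, 0 < del /\ forall h, Rabs h < del ->
  let D := psi (s0 + h) - psi s0 in
  (D - k * h) ^ 2 + (1 - k ^ 2) * h ^ 2 <= 36 * eta ^ 2 * h ^ 2.
Proof.
  intros He He2. destruct (KS eta He) as [del [Hdel H]]. exists del. split; auto.
  intros h Hh D. specialize (H h Hh). simpl in H. fold D in H. rewrite HC1, HT1 in H.
  pose proof k_le1. 
  assert (Hq : 6 * eta ^ 2 <= 1/4) by (clear - He He2; simpl; rewrite Rmult_1_r; nra).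
  assert (HD : D ^ 2 <= 5 * h ^ 2).
  { assert ((D - k * h) ^ 2 >= D ^ 2 / 2 - (k * h) ^ 2)
      by (clear -  H0; pose proof (pow2_ge_0 (D - 2 * k * h)); nra).
    assert ((k * h) ^ 2 <= h ^ 2).
    { clear - H0 Hk. rewrite Rpow_mult_distr. assert (k^2 <= 1) by (simpl; nra).
      pose proof (pow2_ge_0 h); nra. }
    assert ((D - k * h) ^ 2 + (1 - k ^ 2) * h ^ 2 = D ^ 2 * 1 - 2 * k * D * h + h ^ 2 * 1) by ring.
    assert (0 <= (1 - k ^ 2) * h ^ 2).
    { clear - H0 Hk. apply Rmult_le_pos; [simpl; nra| apply pow2_ge_0]. }
    clear - H H1 H2 H3 H4 Hq. nra. }
  nra.
Qed.

Lemma k_eq1 : k = 1.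
Proof.
  pose proof k_le1. destruct (Req_dec k 1) as [|NE]; auto. exfalso.
  assert (Hp : 0 < 1 - k ^ 2) by nra.
  set (eta := Rmin (1/5) (sqrt ((1 - k ^ 2) / 72))).
  assert (Hs : 0 < sqrt ((1 - k ^ 2) / 72)) by (apply sqrt_lt_R0; lra).
  assert (He : 0 < eta) by (unfold eta; apply Rmin_glb_lt; lra).
  assert (He2 : eta <= 1/5) by apply Rmin_l.
  assert (He3 : eta ^ 2 <= (1 - k ^ 2) / 72).
  { assert (eta <= sqrt ((1 - k ^ 2) / 72)) by apply Rmin_r.
    rewrite <- (sqrt_sqrt ((1 - k ^ 2) / 72)) by lra. nra. }
  destruct (KS2 eta He He2) as [del [Hdel HH]].
  specialize (HH (del / 2)). simpl in HH.
  assert (Hd2 : Rabs (del / 2) < del) by (rewrite Rabs_pos_eq; lra).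
  specialize (HH Hd2).
  assert (Hp2 : 0 < (del / 2) ^ 2) by (apply pow_lt; lra).
  set (DD := psi (s0 + del / 2) - psi s0) in HH.
  pose proof (pow2_ge_0 (DD - k * (del / 2))).
  assert ((1 - k ^ 2) * (del / 2) ^ 2 <= 36 * eta ^ 2 * (del / 2) ^ 2) by lra.
  assert (1 - k ^ 2 <= 36 * eta ^ 2) by (apply Rmult_le_reg_r with ((del/2)^2); auto; lra).
  lra.
Qed.

Lemma Dlem : derivable_pt_lim psi s0 1.
Proof.
  intros eps Heps.
  set (eta := Rmin (1/5) (eps / 12)).
  assert (He : 0 < eta) by (unfold eta; apply Rmin_glb_lt; lra).
  assert (He2 : eta <= 1/5) by apply Rmin_l.
  assert (He3 : eta <= eps / 12) by apply Rmin_r.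
  destruct (KS2 eta He He2) as [del [Hdel H]].
  exists (mkposreal del Hdel). simpl. intros h Hh0 Hh.
  specialize (H h Hh). simpl in H. rewrite k_eq1 in H.
  set (D := psi (s0 + h) - psi s0) in *.
  assert (Habs : Rabs (D - h) <= 6 * eta * Rabs h).
  { apply Rsqr_incr_0_var. unfold Rsqr.
    replace (Rabs (D - h) * Rabs (D - h)) with ((D - h) ^ 2) by (rewrite <- (pow2_abs (D - h)); ring).
    replace (6 * eta * Rabs h * (6 * eta * Rabs h)) with (36 * eta ^ 2 * (Rabs h)^2) by ring.
    rewrite pow2_abs. replace (D - 1 * h) with (D - h) in H by ring.
    pose proof (pow2_ge_0 h). replace ((1 - 1 ^ 2) * h ^ 2) with 0 in H by ring. lra.
    pose proof (Rabs_pos h); nra. }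
  replace (D / h - 1) with ((D - h) / h) by (field; auto).
  unfold Rdiv. rewrite Rabs_mult, Rabs_inv.
  assert (0 < Rabs h) by (apply Rabs_pos_lt; auto).
  apply (Rmult_lt_reg_r (Rabs h)); auto. rewrite Rmult_assoc, Rinv_l by lra.
  nra.
Qed.
End Dlem.

Lemma shift (c g : R -> V3) (psi : R -> R) A B W1 W2 :
  A < B -> smoothV c -> smoothV g ->
  (forall s, A < s < B -> W1 <= psi s <= W2) ->
  (forall s, A < s < B -> forall t, W1 <= t <= W2 -> g t = g (psi s) -> t = psi s) ->
  (forall s, A < s < B -> c s = g (psi s)) ->
  (forall s, A < s < B -> dot (DV c s) (DV c s) = 1) ->
  (forall t, dot (DV g t) (DV g t) = 1) ->
  (forall s, A < s < B -> 0 < dot (DV c s) (DV g (psi s))) ->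
  exists k, forall s, A < s < B -> psi s = s + k.
Proof.
  intros HAB Hc Hg Hr Hinj Hcg Hc1 Hg1 Hor.
  assert (Hcont : forall s, A < s < B -> continuity_pt psi s).
  { intros s Hs. apply ed_cont. intros eps He.
    destruct (IC g W1 W2 (psi s) Hg (Hr s Hs) (Hinj s Hs) eps He) as [d [Hd H]].
    destruct (smooth_cont_ed c s Hc d Hd) as [d' [Hd' H']].
    exists (Rmin d' (Rmin (s - A) (B - s))). split.
    { repeat apply Rmin_glb_lt; lra. }
    intros y Hy.
    pose proof (Rmin_l d' (Rmin (s - A) (B - s))).
    pose proof (Rmin_r d' (Rmin (s - A) (B - s))).
    pose proof (Rmin_l (s - A) (B - s)). pose proof (Rmin_r (s - A) (B - s)).
    assert (Hy' : A < y < B) by (apply Rabs_def2 in Hy; lra).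
    apply H; [apply Hr; auto|].
    rewrite <- Hcg, <- Hcg by auto. apply H'. lra. }
  assert (Hder : forall s, A < s < B -> is_derive psi s 1).
  { intros s Hs. apply is_derive_Reals.
    apply (Dlem c g psi s (Rmin (s - A) (B - s))); auto.
    - apply Rmin_glb_lt; lra.
    - intros y Hy. pose proof (Rmin_l (s - A) (B - s)). pose proof (Rmin_r (s - A) (B - s)).
      apply Hcg. apply Rabs_def2 in Hy; lra. }
  set (m := (A + B) / 2).
  exists (psi m - m). intros s Hs.
  assert (Hm : A < m < B) by (unfold m; lra).
  destruct (MVT_gen psi m s (fun _ => 1)) as [x [Hx E]].
  - intros x Hx. apply Hder. pose proof (Rmin_l m s); pose proof (Rmin_r m s);
      pose proof (Rmax_l m s); pose proof (Rmax_r m s).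
    unfold Rmin, Rmax in *; destruct (Rle_dec m s); lra.
  - intros x Hx. apply Hcont.
    unfold Rmin, Rmax in *; destruct (Rle_dec m s); lra.
  - lra.
Qed.

Lemma cpl f g t : continuity_pt f t -> continuity_pt g t -> continuity_pt (fun u => f u + g u) t.
Proof. apply continuity_pt_plus. Qed.
Lemma cmi f g t : continuity_pt f t -> continuity_pt g t -> continuity_pt (fun u => f u - g u) t.
Proof. apply continuity_pt_minus. Qed.
Lemma cmu f g t : continuity_pt f t -> continuity_pt g t -> continuity_pt (fun u => f u * g u) t.
Proof. apply continuity_pt_mult. Qed.

Lemma cp2 f t : continuity_pt f t -> continuity_pt (fun u => f u ^ 2) t.
Proof. intros H. apply (continuity_pt_ext (fun u => f u * f u)). intros; ring. apply cmu; auto. Qed.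

Lemma dist2_cont2 (g h : R -> V3) t : smoothV g -> smoothV h ->
  continuity_pt (fun u => dist2 (g u) (h u)) t.
Proof.
  intros [g1 [g2 g3]] [h1 [h2 h3]]. unfold dist2.
  pose proof (exd_cont _ t (sm0 _ t g1)); pose proof (exd_cont _ t (sm0 _ t g2));
  pose proof (exd_cont _ t (sm0 _ t g3)).
  pose proof (exd_cont _ t (sm0 _ t h1)); pose proof (exd_cont _ t (sm0 _ t h2));
  pose proof (exd_cont _ t (sm0 _ t h3)).
  repeat apply cpl; apply cp2; apply cmi; assumption.
Qed.

Lemma agree_closure (c d : R -> V3) x del : smoothV c -> smoothV d -> 0 < del ->
  ((forall y, x - del < y < x -> c y = d y) \/ (forall y, x < y < x + del -> c y = d y)) ->
  c x = d x.
Proof.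
  intros Hc Hd Hdel H. apply dist2_0.
  destruct (Rle_lt_or_eq_dec 0 (dist2 (c x) (d x)) (dist2_pos _ _)) as [P|P]; [exfalso|auto].
  destruct (cont_ed _ _ (dist2_cont2 c d x Hc Hd) _ P) as [e [He Hy]].
  set (m := Rmin e del / 2).
  assert (0 < Rmin e del) by (apply Rmin_glb_lt; auto).
  pose proof (Rmin_l e del); pose proof (Rmin_r e del).
  destruct H as [H|H].
  - specialize (Hy (x - m)). rewrite H in Hy by (unfold m; lra).
    replace (dist2 (d (x - m)) (d (x - m))) with 0 in Hy by (unfold dist2; ring).
    rewrite Rminus_0_l, Rabs_Ropp, (Rabs_pos_eq (dist2 _ _)) in Hy by lra.
    apply (Rlt_irrefl (dist2 (c x) (d x))). apply Hy.
    replace (x - m - x) with (- m) by ring. rewrite Rabs_Ropp, Rabs_pos_eq; unfold m; lra.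
  - specialize (Hy (x + m)). rewrite H in Hy by (unfold m; lra).
    replace (dist2 (d (x + m)) (d (x + m))) with 0 in Hy by (unfold dist2; ring).
    rewrite Rminus_0_l, Rabs_Ropp, (Rabs_pos_eq (dist2 _ _)) in Hy by lra.
    apply (Rlt_irrefl (dist2 (c x) (d x))). apply Hy.
    replace (x + m - x) with m by ring. rewrite Rabs_pos_eq; unfold m; lra.
Qed.

Lemma choose_fun (P : R -> Prop) (Q : R -> R -> Prop) :
  (forall s, P s -> exists t, Q s t) -> exists f : R -> R, forall s, P s -> Q s (f s).
Proof.
  intros H.
  destruct (choice (fun s t => P s -> Q s t)) as [f Hf].
  - intros s. destruct (classic (P s)) as [Hp|Hn].
    + destruct (H s Hp) as [t Ht]. exists t; auto.
    + exists 0. intros; contradiction.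
  - exists f; auto.
Qed.

Lemma param_nonclosed gam l (c : R -> V3) :
  ArcCurve gam l false -> smoothV c ->
  (forall s, Jdom false l s -> vnorm (DV c s) = 1) ->
  (forall s, Jdom false l s -> exists t, Jdom false l t /\ c s = gam t /\ 0 < dot (DV c s) (DV gam t)) ->
  forall s, Jdom false l s -> c s = gam s.
Proof.
  intros [Hl [Hg [Hg1 [_ Hginj]]]] Hc Hc1 Hor.
  destruct (choose_fun _ _ Hor) as [phi Hphi].
  unfold Jdom in *.
  destruct (shift c gam phi (- (l/2)) (l/2) (- (l/2)) (l/2)) as [k Hk]; auto; try lra.
  - intros s Hs. apply Hphi; lra.
  - intros s Hs t Ht E. apply Hginj; auto. apply Hphi; lra.
  - intros s Hs. apply Hphi; lra.
  - intros s Hs. apply dot_self_1. apply Hc1; lra.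
  - intros t. apply dot_self_1. auto.
  - intros s Hs. apply Hphi; lra.
  - assert (k = 0).
    { destruct (Rtotal_order k 0) as [Hn|[E|Hp]]; auto; exfalso.
      - set (m := Rmin (- k) l). assert (0 < m) by (apply Rmin_glb_lt; lra).
        pose proof (Rmin_l (-k) l); pose proof (Rmin_r (-k) l).
        assert (Hs : - (l/2) < - (l/2) + m/2 < l/2) by (unfold m in *; lra).
        pose proof (Hk _ Hs). assert (- (l/2) <= phi (- (l/2) + m/2)) by (apply Hphi; lra). unfold m in *; lra.
      - set (m := Rmin k l). assert (0 < m) by (apply Rmin_glb_lt; lra).
        pose proof (Rmin_l k l); pose proof (Rmin_r k l).
        assert (Hs : - (l/2) < l/2 - m/2 < l/2) by (unfold m in *; lra).
        pose proof (Hk _ Hs). assert (phi (l/2 - m/2) <= l/2) by (apply Hphi; lra). unfold m in *; lra. }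
    subst k.
    assert (Hint : forall s, - (l/2) < s < l/2 -> c s = gam s).
    { intros s Hs. destruct (Hphi s ltac:(lra)) as [_ [E _]]. rewrite E, Hk by auto. f_equal; ring. }
    intros s Hs. destruct (Rle_lt_or_eq_dec _ _ (proj1 Hs)) as [H1|H1];
      [destruct (Rle_lt_or_eq_dec _ _ (proj2 Hs)) as [H2|H2]|].
    + apply Hint; lra.
    + apply (agree_closure c gam s l Hc Hg Hl). left. intros y Hy. apply Hint. lra.
    + apply (agree_closure c gam s l Hc Hg Hl). right. intros y Hy. apply Hint. lra.
Qed.

Lemma DV_periodic (g : R -> V3) l t : smoothV g -> (forall u, g (u + l) = g u) -> DV g (t + l) = DV g t.
Proof.
  intros [g1 [g2 g3]] Hp. unfold DV. apply V3_eq; simpl;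
  match goal with |- Derive ?f _ = _ =>
    rewrite <- (Derive_ext (fun u => f (u + l)) f t) by (intros; rewrite Hp; reflexivity);
    rewrite (Derive_comp f (fun u => u + l) t);
    [ replace (Derive (fun u => u + l) t) with 1 by (symmetry; apply is_derive_unique; auto_derive; [exact I|ring]); ring
    | apply sm0; assumption
    | auto_derive; exact I]
  end.
Qed.

Lemma param_closed gam l (c : R -> V3) :
  ArcCurve gam l true -> smoothV c ->
  (forall s, Jdom true l s -> vnorm (DV c s) = 1) ->
  (forall s1 s2, Jdom true l s1 -> Jdom true l s2 -> c s1 = c s2 -> s1 = s2) ->
  (forall s, Jdom true l s -> exists t, Jdom true l t /\ c s = gam t /\ 0 < dot (DV c s) (DV gam t)) ->
  exists a, 0 <= a < l /\ forall s, Jdom true l s -> c s = gam (s + a).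
Proof.
  intros [Hl [Hg [Hg1 [Hper Hginj]]]] Hc Hc1 Hcinj Hor.
  specialize (Hper eq_refl).
  destruct (choose_fun _ _ Hor) as [phi Hphi].
  unfold Jdom in *.
  set (a := phi 0).
  assert (Ha : 0 <= a < l) by (apply Hphi; lra).
  set (psi := fun s => if Rle_dec a (phi s) then phi s else phi s + l).
  assert (Hpsi : forall s, 0 <= s < l -> c s = gam (psi s) /\ 0 < dot (DV c s) (DV gam (psi s))
                   /\ a <= psi s < a + l).
  { intros s Hs. destruct (Hphi s Hs) as [H1 [H2 H3]]. unfold psi.
    destruct (Rle_dec a (phi s)).
    - repeat split; auto; lra.
    - rewrite Hper, DV_periodic; auto. repeat split; auto; lra. }
  assert (Hgm : forall x, gam (x - l) = gam x) by (intros x; rewrite <- (Hper (x - l)); f_equal; ring).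
  assert (Hpsi2 : forall s, 0 < s < l -> a < psi s).
  { intros s Hs. destruct (Hpsi s ltac:(lra)) as [H1 [_ H3]].
    destruct (Rle_lt_or_eq_dec _ _ (proj1 H3)) as [|E]; auto. exfalso.
    assert (c s = c 0). { rewrite H1, <- E. unfold a. symmetry. apply Hphi; lra. }
    apply Hcinj in H; lra. }
  destruct (shift c gam psi 0 l a (a + l)) as [k Hk]; auto; try lra.
  - intros s Hs. destruct (Hpsi s ltac:(lra)) as [_ [_ H3]]. lra.
  - intros s Hs t Ht E.
    destruct (Hpsi s ltac:(lra)) as [_ [_ H3]]. pose proof (Hpsi2 s Hs).
    destruct (Rlt_dec t l) as [Htl|Htl]; destruct (Rlt_dec (psi s) l) as [Hpl|Hpl].
    + apply Hginj; auto; lra.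
    + rewrite <- (Hgm (psi s)) in E. apply Hginj in E; lra.
    + rewrite <- (Hgm t) in E. apply Hginj in E; lra.
    + rewrite <- (Hgm t), <- (Hgm (psi s)) in E. apply Hginj in E; lra.
  - intros s Hs. apply Hpsi; lra.
  - intros s Hs. apply dot_self_1. apply Hc1; lra.
  - intros t. apply dot_self_1. auto.
  - intros s Hs. apply Hpsi; lra.
  - assert (k = a).
    { destruct (Rtotal_order k a) as [Hn|[E|Hp]]; auto; exfalso.
      - set (m := Rmin (a - k) l). assert (0 < m) by (apply Rmin_glb_lt; lra).
        assert (m <= a - k) by apply Rmin_l. assert (m <= l) by apply Rmin_r.
        assert (Hs : 0 < m / 2 < l) by lra.
        pose proof (Hk _ Hs). pose proof (Hpsi2 _ Hs). lra.
      - set (m := Rmin (k - a) l). assert (0 < m) by (apply Rmin_glb_lt; lra).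
        assert (m <= k - a) by apply Rmin_l. assert (m <= l) by apply Rmin_r.
        assert (Hs : 0 < l - m / 2 < l) by lra.
        pose proof (Hk _ Hs). destruct (Hpsi _ (ltac:(lra) : 0 <= l - m/2 < l)) as [_ [_ H3]]. lra. }
    subst k. exists a. split; auto. intros s Hs.
    destruct (Rle_lt_or_eq_dec _ _ (proj1 Hs)) as [H1|H1].
    + destruct (Hpsi s Hs) as [E _]. rewrite E, Hk by lra. f_equal; ring.
    + subst s. rewrite Rplus_0_l. unfold a. apply Hphi; lra.
Qed.

Lemma idr (f : R -> R) (x d1 d2 : R) : is_derive f x d1 -> d1 = d2 -> is_derive f x d2.
Proof. intros H E; subst; auto. Qed.
Lemma idm (f g : R -> R) x df dg : is_derive f x df -> is_derive g x dg ->
  is_derive (fun t => f t * g t) x (df * g x + f x * dg).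
Proof. intros H1 H2. apply (is_derive_mult f g x df dg H1 H2). intros; apply Rmult_comm. Qed.
Lemma idp (f g : R -> R) x df dg : is_derive f x df -> is_derive g x dg ->
  is_derive (fun t => f t + g t) x (df + dg).
Proof. intros H1 H2. apply (is_derive_plus f g x df dg H1 H2). Qed.
Lemma idmi (f g : R -> R) x df dg : is_derive f x df -> is_derive g x dg ->
  is_derive (fun t => f t - g t) x (df - dg).
Proof. intros H1 H2. apply (is_derive_minus f g x df dg H1 H2). Qed.

Definition DVat (f : R -> V3) s (d : V3) :=
  is_derive (fun t => v1 (f t)) s (v1 d) /\ is_derive (fun t => v2 (f t)) s (v2 d) /\
  is_derive (fun t => v3 (f t)) s (v3 d).

Lemma DVat_smooth f s : smoothV f -> DVat f s (DV f s).
Proof. intros [f1 [f2 f3]]; unfold DVat, DV; simpl; refine (conj _ (conj _ _)); apply Derive_correct; apply sm0; auto. Qed.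

Ltac dcomp := repeat match goal with
 | |- is_derive (fun t => _ + _) _ _ => apply idp
 | |- is_derive (fun t => _ - _) _ _ => apply idmi
 | |- is_derive (fun t => _ * _) _ _ => apply idm
 | |- _ => eassumption
 end.

Lemma DVat_add f g s d1 d2 : DVat f s d1 -> DVat g s d2 -> DVat (fun t => vadd (f t) (g t)) s (vadd d1 d2).
Proof. intros [a1 [a2 a3]] [b1 [b2 b3]]; unfold DVat, vadd; simpl; refine (conj _ (conj _ _)); (eapply idr; [dcomp|cbv beta; ring]). Qed.

Lemma DVat_scale (a : R -> R) f s da d : is_derive a s da -> DVat f s d ->
  DVat (fun t => vscale (a t) (f t)) s (vadd (vscale da (f s)) (vscale (a s) d)).
Proof. intros Ha [a1 [a2 a3]]; unfold DVat, vadd, vscale; simpl; refine (conj _ (conj _ _)); (eapply idr; [dcomp|cbv beta; ring]). Qed.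

Lemma DVat_cross f g s d1 d2 : DVat f s d1 -> DVat g s d2 ->
  DVat (fun t => cross (f t) (g t)) s (vadd (cross d1 (g s)) (cross (f s) d2)).
Proof.
  intros [a1 [a2 a3]] [b1 [b2 b3]]; unfold DVat, vadd, cross; simpl; refine (conj _ (conj _ _));
  (eapply idr; [dcomp|cbv beta; ring]).
Qed.

Lemma is_derive_dot f g s d1 d2 : DVat f s d1 -> DVat g s d2 ->
  is_derive (fun t => dot (f t) (g t)) s (dot d1 (g s) + dot (f s) d2).
Proof. intros [a1 [a2 a3]] [b1 [b2 b3]]; unfold dot; (eapply idr; [dcomp|cbv beta; ring]). Qed.

Definition lamf (e X Y : V3) := dot (cross e Y) (cross e X) / dot (cross e X) (cross e X).
Definition muf (e X Y : V3) := dot Y e - lamf e X Y * dot X e.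

Lemma det_identity e X X' e' l m l' m' :
  det3 e (vadd (vscale l X) (vscale m e)) (vadd (vadd (vscale l' X) (vscale l X')) (vadd (vscale m' e) (vscale m e')))
  = l ^ 2 * det3 e X X' + l * m * det3 e X e'.
Proof. destruct e, X, X', e'; unfold det3, dot, cross, vadd, vscale; simpl; ring. Qed.

Lemma lammu (e X Y : R -> V3) (P : R -> Prop) s0 d :
  smoothV e -> smoothV X -> smoothV Y -> 0 < d -> OSN P s0 d ->
  (forall s, P s -> Y s = vadd (vscale (lamf (e s) (X s) (Y s)) (X s)) (vscale (muf (e s) (X s) (Y s)) (e s))) ->
  dot (cross (e s0) (X s0)) (cross (e s0) (X s0)) <> 0 ->
  det3 (e s0) (X s0) (DV X s0) = 0 -> det3 (e s0) (Y s0) (DV Y s0) = 0 ->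
  det3 (e s0) (X s0) (DV e s0) <> 0 -> lamf (e s0) (X s0) (Y s0) <> 0 ->
  muf (e s0) (X s0) (Y s0) = 0.
Proof.
  intros He HX HY Hd HO Hdec Hden DX DY De Hl.
  pose proof (DVat_smooth e s0 He) as Ee. pose proof (DVat_smooth X s0 HX) as EX.
  pose proof (DVat_smooth Y s0 HY) as EY.
  set (lam := fun t => lamf (e t) (X t) (Y t)).
  set (mu := fun t => muf (e t) (X t) (Y t)).
  assert (Hlam : exists l', is_derive lam s0 l').
  { eexists. unfold lam, lamf. apply is_derive_div; auto;
    apply is_derive_dot; apply DVat_cross; eauto. }
  destruct Hlam as [l' Hlam].
  assert (Hmu : exists m', is_derive mu s0 m').
  { eexists. unfold mu, muf. fold (lam s0). apply idmi. apply is_derive_dot; eauto.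
    apply idm; [exact Hlam| apply is_derive_dot; eauto]. }
  destruct Hmu as [m' Hmu].
  set (Rf := fun t => vadd (Y t) (vscale (-1) (vadd (vscale (lam t) (X t)) (vscale (mu t) (e t))))).
  set (dR := (vadd (DV Y s0) (vadd (vscale 0 (vadd (vscale (lam s0) (X s0)) (vscale (mu s0) (e s0)))) (vscale (-1) (vadd (vadd (vscale l' (X s0)) (vscale (lam s0) (DV X s0))) (vadd (vscale m' (e s0)) (vscale (mu s0) (DV e s0)))))))).
  assert (HR : DVat Rf s0 dR).
  { unfold Rf, dR. apply DVat_add; [exact EY|].
    apply (DVat_scale (fun _ => -1) (fun t => vadd (vscale (lam t) (X t)) (vscale (mu t) (e t))) s0 0); [apply is_derive_Reals; apply derivable_pt_lim_const|].
    apply DVat_add; apply DVat_scale; auto. }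
  assert (HRz : forall t, P t -> Rf t = vzero).
  { intros t Pt. unfold Rf, lam, mu. rewrite (Hdec t Pt) at 1.
    destruct (X t), (e t); unfold vadd, vscale, vzero; simpl. f_equal; ring. }
  assert (P0 : P s0) by (destruct HO as [HO|HO]; [specialize (HO 0)|specialize (HO 0)];
      rewrite ?Rplus_0_r, ?Rminus_0_r in HO; apply HO; lra).
  assert (HR0 : forall i : V3 -> R, 
     is_derive (fun t => i (Rf t)) s0 (i dR) -> i dR = 0).
  { intros i Hder. apply (os_zero _ s0 d _ Hder Hd).
    eapply OSN_imp; [|exact HO]. intros y Py. simpl. rewrite (HRz y Py), (HRz s0 P0). reflexivity. }
  destruct HR as [R1 [R2 R3]].
  pose proof (HR0 v1 R1) as Z1. pose proof (HR0 v2 R2) as Z2. pose proof (HR0 v3 R3) as Z3.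
  unfold dR in Z1, Z2, Z3.
  assert (EY' : DV Y s0 = vadd (vadd (vscale l' (X s0)) (vscale (lam s0) (DV X s0))) (vadd (vscale m' (e s0)) (vscale (mu s0) (DV e s0)))).
  { revert Z1 Z2 Z3. destruct (DV Y s0), (X s0), (DV X s0), (e s0), (DV e s0); unfold vadd, vscale; simpl.
    intros. apply V3_eq; simpl; lra. }
  pose proof (Hdec s0 P0) as EY0.
  rewrite EY', EY0 in DY. fold (lam s0) (mu s0) in DY. rewrite det_identity, DX in DY.
  fold (lam s0) (mu s0) in Hl |- *.
  assert (lam s0 * (mu s0 * det3 (e s0) (X s0) (DV e s0)) = 0) by (rewrite <- DY; ring).
  apply Rmult_integral in H. destruct H as [H|H]; [contradiction|].
  apply Rmult_integral in H. destruct H; [auto|contradiction].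
Qed.

Lemma Derive_n_D f k x : Derive_n (Derive f) k x = Derive_n f (S k) x.
Proof.
  revert x. induction k; intros x; simpl; [reflexivity|].
  apply Derive_ext. intros t. rewrite IHk. reflexivity.
Qed.

Lemma smooth1_D f : smooth1 f -> smooth1 (Derive f).
Proof.
  intros H k x. apply (ex_derive_ext (Derive_n f (S k))).
  - intros t. symmetry. apply Derive_n_D.
  - apply H.
Qed.

Lemma smoothV_DV c : smoothV c -> smoothV (DV c).
Proof. intros [c1 [c2 c3]]. unfold DV; simpl. repeat split; apply smooth1_D; auto. Qed.

Definition uvec (ca sa : R) (n b : V3) := vadd (vscale ca n) (vscale sa b).
Definition xvec (cb sb : R) (e u : V3) := vadd (vscale cb e) (vscale sb u).

Section Frame.
Variables (e p : V3) (kap ca sa cb sb : R).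
Hypothesis Hee : dot e e = 1.
Hypothesis Hep : dot e p = 0.
Hypothesis Hpp : dot p p = kap ^ 2.
Hypothesis Hk : kap <> 0.
Let n := vscale (/ kap) p.
Let u := uvec ca sa n (cross e n).

Lemma fr_eu : dot e u = 0.
Proof.
  unfold u, n, uvec. replace (dot e _) with (ca * / kap * dot e p) by (destruct e, p; unfold dot, vadd, vscale, cross; simpl; ring).
  rewrite Hep; ring.
Qed.

Lemma fr_uu : dot u u = ca ^ 2 + sa ^ 2.
Proof.
  unfold u, n, uvec.
  replace (dot _ _) with ((/ kap) ^ 2 * (ca ^ 2 * dot p p + sa ^ 2 * (dot e e * dot p p - (dot e p) ^ 2)))
    by (destruct e, p; unfold dot, vadd, vscale, cross; simpl; ring).
  rewrite Hee, Hep, Hpp. field. auto.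
Qed.

Lemma fr_sign : dot (xvec cb sb e u) (cross e p) = kap * sb * sa.
Proof.
  unfold u, n, uvec, xvec.
  replace (dot _ _) with (sb * sa * / kap * (dot e e * dot p p - (dot e p) ^ 2))
    by (destruct e, p; unfold dot, vadd, vscale, cross; simpl; ring).
  rewrite Hee, Hep, Hpp. field. auto.
Qed.

Lemma fr_det : det3 e (xvec cb sb e u) p = - (kap * sb * sa).
Proof.
  unfold u, n, uvec, xvec.
  replace (det3 _ _ _) with (- (sb * sa * / kap * (dot e e * dot p p - (dot e p) ^ 2)))
    by (destruct e, p; unfold det3, dot, vadd, vscale, cross; simpl; ring).
  rewrite Hee, Hep, Hpp. field. auto.
Qed.
End Frame.

Lemma alg_decomp e u cF sF cG sG :
  dot e e = 1 -> dot e u = 0 -> dot u u = 1 -> sF <> 0 ->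
  lamf e (xvec cF sF e u) (xvec cG sG e u) = sG / sF /\
  muf e (xvec cF sF e u) (xvec cG sG e u) = cG - sG / sF * cF /\
  dot (cross e (xvec cF sF e u)) (cross e (xvec cF sF e u)) = sF ^ 2.
Proof.
  intros Hee Heu Huu HsF.
  assert (E1 : dot (cross e (xvec cG sG e u)) (cross e (xvec cF sF e u)) = sG * sF * (dot e e * dot u u - (dot e u)^2))
    by (destruct e, u; unfold xvec, dot, vadd, vscale, cross; simpl; ring).
  assert (E2 : dot (cross e (xvec cF sF e u)) (cross e (xvec cF sF e u)) = sF * sF * (dot e e * dot u u - (dot e u)^2))
    by (destruct e, u; unfold xvec, dot, vadd, vscale, cross; simpl; ring).
  rewrite Hee, Heu, Huu in E1, E2.
  assert (L : lamf e (xvec cF sF e u) (xvec cG sG e u) = sG / sF).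
  { unfold lamf. rewrite E1, E2. field. auto. }
  split; [exact L|]. split.
  - unfold muf. rewrite L.
    replace (dot (xvec cG sG e u) e) with (cG * dot e e + sG * dot e u)
      by (destruct e, u; unfold xvec, dot, vadd, vscale; simpl; ring).
    replace (dot (xvec cF sF e u) e) with (cF * dot e e + sF * dot e u)
      by (destruct e, u; unfold xvec, dot, vadd, vscale; simpl; ring).
    rewrite Hee, Heu. ring.
  - rewrite E2. ring.
Qed.

Lemma xvec_decomp e u cF sF cG sG : sF <> 0 ->
  xvec cG sG e u = vadd (vscale (sG / sF) (xvec cF sF e u)) (vscale (cG - sG / sF * cF) e).
Proof. intros H. destruct e, u; unfold xvec, vadd, vscale; simpl. apply V3_eq; simpl; field; auto. Qed.

Lemma det_cyc a b c : det3 a b c = det3 c a b.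
Proof. destruct a, b, c; unfold det3, dot, cross; simpl; ring. Qed.

Ltac ccomp := repeat match goal with
 | |- continuity_pt (fun t => _ + _) _ => apply cpl
 | |- continuity_pt (fun t => _ - _) _ => apply cmi
 | |- continuity_pt (fun t => _ * _) _ => apply cmu
 | |- _ => eassumption
 end.

Lemma cont_dcross (A B C : R -> V3) t : smoothV A -> smoothV B -> smoothV C ->
  continuity_pt (fun s => dot (A s) (cross (B s) (C s))) t.
Proof.
  intros [a1 [a2 a3]] [b1 [b2 b3]] [c1 [c2 c3]].
  pose proof (exd_cont _ t (sm0 _ t a1)); pose proof (exd_cont _ t (sm0 _ t a2));
  pose proof (exd_cont _ t (sm0 _ t a3)).
  pose proof (exd_cont _ t (sm0 _ t b1)); pose proof (exd_cont _ t (sm0 _ t b2));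
  pose proof (exd_cont _ t (sm0 _ t b3)).
  pose proof (exd_cont _ t (sm0 _ t c1)); pose proof (exd_cont _ t (sm0 _ t c2));
  pose proof (exd_cont _ t (sm0 _ t c3)).
  unfold dot, cross; simpl. ccomp.
Qed.

Lemma sin_pos_of a : 0 < a < PI / 2 -> 0 < sin a.
Proof. intros H. apply sin_gt_0; pose proof PI_RGT_0; lra. Qed.

Lemma sin_sign a : 0 < Rabs a < PI / 2 -> (0 < a /\ 0 < sin a) \/ (a < 0 /\ sin a < 0).
Proof.
  intros H. unfold Rabs in H. destruct (Rcase_abs a).
  - right. split; auto. rewrite <- (Ropp_involutive a), sin_neg.
    pose proof (sin_pos_of (- a) ltac:(lra)). lra.
  - left. split; [lra|]. apply sin_pos_of; lra.
Qed.

Lemma cos_abs a : cos a = cos (Rabs a).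
Proof. unfold Rabs; destruct (Rcase_abs a); [rewrite cos_neg|]; reflexivity. Qed.

Lemma abs_eq_of_cos a b : Rabs a < PI / 2 -> Rabs b < PI / 2 -> cos a = cos b -> Rabs a = Rabs b.
Proof.
  intros Ha Hb E. rewrite (cos_abs a), (cos_abs b) in E. pose proof PI_RGT_0.
  apply cos_inj; auto; split; try apply Rabs_pos; lra.
Qed.

Lemma curv_sq c s : curvature c s ^ 2 = dot (DV (DV c) s) (DV (DV c) s).
Proof.
  unfold curvature, vnorm. simpl. rewrite Rmult_1_r. apply sqrt_sqrt.
  destruct (DV (DV c) s); unfold dot; simpl; nra.
Qed.

Lemma sign_const (W : R -> R) (J : R -> Prop) :
  (forall t, continuity_pt W t) ->
  (forall x y z, J x -> J z -> x <= y <= z -> J y) ->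
  (forall s, J s -> W s <> 0) ->
  (forall s, J s -> 0 < W s) \/ (forall s, J s -> W s < 0).
Proof.
  intros Hc Hconv Hnz.
  destruct (classic (forall s, J s -> 0 < W s)) as [H|H]; [left; auto|right].
  apply not_all_ex_not in H. destruct H as [s1 H1].
  assert (J1 : J s1) by (apply NNPP; intro; apply H1; intro; contradiction).
  assert (W1 : W s1 < 0).
  { destruct (Rtotal_order (W s1) 0) as [|[E|P]]; auto; exfalso; [apply (Hnz s1 J1 E)|apply H1; auto]. }
  intros s2 J2. destruct (Rtotal_order (W s2) 0) as [|[E|P]]; auto; exfalso; [apply (Hnz s2 J2 E)|].
  destruct (IVT_gen W s1 s2 0 Hc) as [x [Hx Ex]].
  { pose proof (Rmin_l (W s1) (W s2)); pose proof (Rmax_r (W s1) (W s2)). lra. }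
  apply (Hnz x); auto.
  unfold Rmin, Rmax in Hx. destruct (Rle_dec s1 s2).
  - apply (Hconv s1 x s2); auto.
  - apply (Hconv s2 x s1); auto; lra.
Qed.

Lemma J_conv closed l x y z : Jdom closed l x -> Jdom closed l z -> x <= y <= z -> Jdom closed l y.
Proof. unfold Jdom; destruct closed; lra. Qed.

Lemma frame_of (c : R -> V3) s xi a b :
  xi = vadd (vscale (cos b) (tangentF c s))
         (vscale (sin b) (vadd (vscale (cos a) (normalF c s)) (vscale (sin a) (binormalF c s)))) ->
  xi = xvec (cos b) (sin b) (DV c s)
         (uvec (cos a) (sin a) (vscale (/ curvature c s) (DV (DV c) s))
               (cross (DV c s) (vscale (/ curvature c s) (DV (DV c) s)))).
Proof. intros H; rewrite H; reflexivity. Qed.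

Theorem proposition2p13 (gam : R -> V3) (l : R) (closed : bool)
    (F G : R -> R -> V3) (aF aG : R -> R) :
  ArcCurve gam l closed ->
  (forall t, Jdom closed l t -> curvature gam t <> 0) ->
  NormalForm gam l closed F aF ->
  NormalForm gam l closed G aG ->
  F 0 0 = G 0 0 ->
  (forall s, Jdom closed l s -> geodcurv F aF s = geodcurv G aG s) ->
  germ_eq closed l G F \/
  (exists Fd : R -> R -> V3,
      NormalForm gam l closed Fd (fun s => - aF s) /\
      (forall s, Jdom closed l s -> Fd s 0 = F s 0) /\
      germ_eq closed l G Fd).
Proof.
  intros Harc _ HNF HNG H00 Hmu.
  assert (Hl : 0 < l) by apply Harc.
  pose proof HNG as HNG0.
  unfold NormalForm in HNF, HNG; cbv zeta in HNF, HNG.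
  destruct HNF as (xF & bF & eF & HcF & HxF & HF & HxF1 & _ & HunF & HinjF & _ & HorF & HeF & _ & HcrF & HKF & HangF).
  destruct HNG as (xG & bG & eG & HcG & HxG & HG & HxG1 & _ & HunG & HinjG & _ & HorG & HeG & _ & HcrG & HKG & HangG).
  set (cF := fun s => F s 0) in *. set (cG := fun s => G s 0) in *.
  assert (HcFG : forall s, Jdom closed l s -> cF s = cG s).
  { destruct closed.
    - destruct (param_closed gam l cF Harc HcF HunF HinjF HorF) as [a1 [Ha1 H1]].
      destruct (param_closed gam l cG Harc HcG HunG HinjG HorG) as [a2 [Ha2 H2]].
      assert (J0 : Jdom true l 0) by (unfold Jdom; lra).
      assert (a1 = a2).
      { destruct Harc as [_ [_ [_ [_ Hinj]]]]. apply Hinj; unfold Jdom; auto.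
        pose proof (H1 0 J0) as E1; pose proof (H2 0 J0) as E2. rewrite !Rplus_0_l in E1, E2.
        rewrite <- E1, <- E2. exact H00. }
      subst a2. intros s Hs. rewrite H1, H2 by auto. reflexivity.
    - intros s Hs. rewrite (param_nonclosed gam l cF Harc HcF HunF HorF s Hs),
        (param_nonclosed gam l cG Harc HcG HunG HorG s Hs). reflexivity. }
  assert (HDe : forall s, Jdom closed l s -> DV cG s = DV cF s).
  { intros s Hs. symmetry. apply (J_DV_eq closed l); auto. }
  assert (HDp : forall s, Jdom closed l s -> DV (DV cG) s = DV (DV cF) s).
  { intros s Hs. symmetry. apply (J_DDV_eq closed l); auto. }
  assert (Hcv : forall s, Jdom closed l s -> curvature cG s = curvature cF s).
  { intros s Hs. unfold curvature. rewrite HDp; auto. }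
  assert (Hee : forall s, Jdom closed l s -> dot (DV cF s) (DV cF s) = 1).
  { intros s Hs. apply dot_self_1. auto. }
  assert (Hep : forall s, Jdom closed l s -> dot (DV cF s) (DV (DV cF) s) = 0).
  { intros s Hs. apply (frame_e_ep closed l); auto. }
  assert (Hk : forall s, Jdom closed l s -> curvature cF s <> 0).
  { intros s Hs. destruct (HangF s Hs) as [_ [Hb Hx]].
    apply (curv_nz cF s (xF s) (aF s) (bF s)); auto. }
  assert (Hpp : forall s, Jdom closed l s ->
     dot (DV (DV cF) s) (DV (DV cF) s) = curvature cF s ^ 2).
  { intros s Hs. symmetry. apply curv_sq. }
  set (nF := fun s => vscale (/ curvature cF s) (DV (DV cF) s)).
  set (uF := fun s a => uvec (cos a) (sin a) (nF s) (cross (DV cF s) (nF s))).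
  assert (HXF : forall s, Jdom closed l s -> xF s = xvec (cos (bF s)) (sin (bF s)) (DV cF s) (uF s (aF s))).
  { intros s Hs. destruct (HangF s Hs) as [_ [_ Hx]]. apply frame_of in Hx. exact Hx. }
  assert (HXG : forall s, Jdom closed l s -> xG s = xvec (cos (bG s)) (sin (bG s)) (DV cF s) (uF s (aG s))).
  { intros s Hs. destruct (HangG s Hs) as [_ [_ Hx]]. apply frame_of in Hx.
    rewrite Hx, HDe, HDp, Hcv by auto. reflexivity. }
  assert (Heu : forall s a, Jdom closed l s -> dot (DV cF s) (uF s a) = 0).
  { intros s a Hs. unfold uF, nF. apply fr_eu with (kap := curvature cF s); auto. }
  assert (Huu : forall s a, Jdom closed l s -> dot (uF s a) (uF s a) = 1).
  { intros s a Hs. unfold uF, nF. rewrite fr_uu with (kap := curvature cF s); auto.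
    rewrite <- (sin2_cos2 a). unfold Rsqr; ring. }
  assert (Habs : forall s, Jdom closed l s -> Rabs (aF s) = Rabs (aG s)).
  { intros s Hs. pose proof (Hmu s Hs) as E. unfold geodcurv in E. fold cF cG in E.
    rewrite Hcv in E by auto.
    destruct (HangF s Hs) as [[_ A1] _]; destruct (HangG s Hs) as [[_ A2] _].
    apply abs_eq_of_cos; auto.
    apply Rmult_eq_reg_l with (curvature cF s); auto. }
  set (W := fun t => dot (xF t) (cross (DV cF t) (DV (DV cF) t)) * dot (xG t) (cross (DV cF t) (DV (DV cF) t))).
  assert (HW : forall s, Jdom closed l s ->
     W s = (curvature cF s * sin (bF s) * sin (aF s)) * (curvature cF s * sin (bG s) * sin (aG s))).
  { intros s Hs. unfold W. rewrite HXF, HXG by auto. unfold uF, nF.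
    rewrite !fr_sign with (kap := curvature cF s); auto. }
  assert (Hsb : forall s, Jdom closed l s -> 0 < sin (bF s) /\ 0 < sin (bG s)).
  { intros s Hs. destruct (HangF s Hs) as [_ [B1 _]]; destruct (HangG s Hs) as [_ [B2 _]].
    split; apply sin_gt_0; lra. }
  assert (HWc : forall t, continuity_pt W t).
  { intros t. unfold W. apply cmu; apply cont_dcross; auto using smoothV_DV. }
  assert (HWnz : forall s, Jdom closed l s -> W s <> 0).
  { intros s Hs. rewrite HW by auto. destruct (Hsb s Hs) as [S1 S2].
    destruct (HangF s Hs) as [A1 _]; destruct (HangG s Hs) as [A2 _].
    pose proof (Hk s Hs).
    assert (sin (aF s) <> 0) by (destruct (sin_sign _ A1) as [[_ ?]|[_ ?]]; lra).
    assert (sin (aG s) <> 0) by (destruct (sin_sign _ A2) as [[_ ?]|[_ ?]]; lra).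
    repeat apply Rmult_integral_contrapositive_currified; auto; lra. }
  destruct (sign_const W (Jdom closed l) HWc (J_conv closed l) HWnz) as [Hpos|Hneg].
  -
    left.
    assert (HaE : forall s, Jdom closed l s -> aG s = aF s).
    { intros s Hs. pose proof (Hpos s Hs) as P. rewrite HW in P by auto.
      destruct (Hsb s Hs) as [S1 S2]. pose proof (Habs s Hs) as Ab.
      destruct (HangF s Hs) as [A1 _]; destruct (HangG s Hs) as [A2 _].
      assert (P2 : 0 < sin (aF s) * sin (aG s)).
      { assert (0 < (curvature cF s) ^ 2 * sin (bF s) * sin (bG s)).
        { pose proof (Hk s Hs). apply Rmult_lt_0_compat; [apply Rmult_lt_0_compat|]; auto.
          simpl; rewrite Rmult_1_r. destruct (Rtotal_order (curvature cF s) 0) as [|[|]]; nra. }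
        assert (P' : 0 < ((curvature cF s) ^ 2 * sin (bF s) * sin (bG s)) * (sin (aF s) * sin (aG s))) by (simpl; nra).
        apply (Rmult_lt_reg_l ((curvature cF s) ^ 2 * sin (bF s) * sin (bG s))); auto. lra. }
      destruct (sin_sign _ A1) as [[X1 Y1]|[X1 Y1]]; destruct (sin_sign _ A2) as [[X2 Y2]|[X2 Y2]];
        try nra; unfold Rabs in Ab; destruct (Rcase_abs (aF s)); destruct (Rcase_abs (aG s)); lra. }
    assert (HxE : forall s, Jdom closed l s -> xG s = xF s).
    { intros s0 Hs0.
      destruct (J_osn closed l s0 Hl Hs0) as [d [Hd HO]].
      set (cbF := cos (bF s0)). set (sbF := sin (bF s0)). set (cbG := cos (bG s0)). set (sbG := sin (bG s0)).
      assert (Hdec : forall s, Jdom closed l s -> xG s =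
         vadd (vscale (lamf (DV cF s) (xF s) (xG s)) (xF s)) (vscale (muf (DV cF s) (xF s) (xG s)) (DV cF s))).
      { intros s Hs. destruct (Hsb s Hs) as [S1 S2].
        destruct (alg_decomp (DV cF s) (uF s (aF s)) (cos (bF s)) (sin (bF s)) (cos (bG s)) (sin (bG s))
          (Hee s Hs) (Heu s _ Hs) (Huu s _ Hs) ltac:(lra)) as [L1 [L2 _]].
        rewrite HXF, HXG, HaE by auto. rewrite L1, L2. apply xvec_decomp. lra. }
      destruct (Hsb s0 Hs0) as [S1 S2].
      destruct (alg_decomp (DV cF s0) (uF s0 (aF s0)) cbF sbF cbG sbG
          (Hee s0 Hs0) (Heu s0 _ Hs0) (Huu s0 _ Hs0) ltac:(unfold sbF; lra)) as [L1 [L2 L3]].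
      assert (Hmu0 : muf (DV cF s0) (xF s0) (xG s0) = 0).
      { apply (lammu (DV cF) xF xG (Jdom closed l) s0 d); auto using smoothV_DV.
        - rewrite HXF by auto. fold cbF sbF. rewrite L3. unfold sbF. apply pow_nonzero. lra.
        - rewrite det_cyc. apply (gauss_det F cF xF HcF HxF HF s0).
          + apply HKF; auto. rewrite Rabs_R0; auto.
          + apply HcrF; auto. rewrite Rabs_R0; auto.
        - rewrite det_cyc. rewrite <- (HDe s0 Hs0). apply (gauss_det G cG xG HcG HxG HG s0).
          + apply HKG; auto. rewrite Rabs_R0; auto.
          + apply HcrG; auto. rewrite Rabs_R0; auto.
        - rewrite HXF by auto. unfold uF, nF.
          rewrite fr_det with (kap := curvature cF s0); auto.
          destruct (HangF s0 Hs0) as [A1 _]. pose proof (Hk s0 Hs0).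
          assert (sin (aF s0) <> 0) by (destruct (sin_sign _ A1) as [[_ ?]|[_ ?]]; lra).
          apply Ropp_neq_0_compat. repeat apply Rmult_integral_contrapositive_currified; auto; lra.
        - rewrite HXF, HXG, HaE by auto. fold cbF sbF cbG sbG. rewrite L1. unfold sbG, sbF. 
          apply Rmult_integral_contrapositive_currified; [lra|apply Rinv_neq_0_compat; lra]. }
      rewrite HXF, HXG, HaE in Hmu0 by auto. fold cbF sbF cbG sbG in Hmu0. rewrite L2 in Hmu0.
      assert (T1 : sin (bF s0) ^ 2 + cos (bF s0) ^ 2 = 1) by (rewrite <- (sin2_cos2 (bF s0)); unfold Rsqr; ring).
      assert (T2 : sin (bG s0) ^ 2 + cos (bG s0) ^ 2 = 1) by (rewrite <- (sin2_cos2 (bG s0)); unfold Rsqr; ring).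
      fold cbF sbF cbG sbG in T1, T2, S1, S2.
      set (t := sbG / sbF) in *.
      assert (Et : sbG = t * sbF) by (unfold t; field; lra).
      assert (Ec : cbG = t * cbF) by lra.
      assert (t ^ 2 = 1) by (rewrite Et, Ec in T2; nra).
      assert (0 < t) by (unfold t; apply Rdiv_lt_0_compat; lra).
      assert (t = 1) by nra.
      rewrite HXF, HXG, HaE by auto. fold cbF sbF cbG sbG.
      rewrite Et, Ec, H1. f_equal; ring. }
    exists 1. split; [lra|]. intros s v Hs _.
    rewrite HF, HG. fold (cF s) (cG s). rewrite HcFG, HxE by auto. reflexivity.
  -
    right. exists G.
    assert (HaN : forall s, Jdom closed l s -> aG s = - aF s).
    { intros s Hs. pose proof (Hneg s Hs) as P. rewrite HW in P by auto.
      destruct (Hsb s Hs) as [S1 S2]. pose proof (Habs s Hs) as Ab.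
      destruct (HangF s Hs) as [A1 _]; destruct (HangG s Hs) as [A2 _].
      assert (P2 : sin (aF s) * sin (aG s) < 0).
      { assert (0 < (curvature cF s) ^ 2 * sin (bF s) * sin (bG s)).
        { pose proof (Hk s Hs). apply Rmult_lt_0_compat; [apply Rmult_lt_0_compat|]; auto.
          simpl; rewrite Rmult_1_r. destruct (Rtotal_order (curvature cF s) 0) as [|[|]]; nra. }
        assert (P' : ((curvature cF s) ^ 2 * sin (bF s) * sin (bG s)) * (sin (aF s) * sin (aG s)) < 0) by (simpl; nra).
        destruct (Rlt_dec (sin (aF s) * sin (aG s)) 0) as [|N]; auto. exfalso. nra. }
      destruct (sin_sign _ A1) as [[X1 Y1]|[X1 Y1]]; destruct (sin_sign _ A2) as [[X2 Y2]|[X2 Y2]];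
        try nra; unfold Rabs in Ab; destruct (Rcase_abs (aF s)); destruct (Rcase_abs (aG s)); lra. }
    split; [|split].
    + unfold NormalForm in HNG0 |- *. cbv zeta in HNG0 |- *.
      destruct HNG0 as (xi & be & ep & P1 & P2 & P3 & P4 & P5 & P6 & P7 & P8 & P9 & P10 & P11 & P12 & P13 & P14).
      exists xi, be, ep. do 13 (split; [assumption|]).
      intros s Hs. rewrite <- (HaN s Hs). apply P14; auto.
    + intros s Hs. symmetry. apply HcFG; auto.
    + exists 1. split; [lra|]. intros; reflexivity.
Qed.
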